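(* Let $0<p<1/2$ and $\alpha_p=\frac12\log_2\frac{1}{4p(1-p)}$. There exists a constant $C_p>0$ depending only on $p$ such that for all sufficiently large $n$ (with $pn$ an integer) and all integers $1\le d\le n$, $$\frac{\mathrm{Vol}(n,pn;d)}{\mathrm{Vol}(n,pn)}\le 2^{-\alpha_p d}\cdot C_p\sqrt{n}.$$
   Context: $\Delta$ is Hamming distance on $\mathbb{F}_2^n$, $\mathcal{B}(x,r)=\{y:\Delta(x,y)\le r\}$, $\mathrm{Vol}(n,r)=|\mathcal{B}(0^n,r)|$, and $\mathrm{Vol}(n,pn;d)=|\mathcal{B}(0^n,pn)\cap\mathcal{B}(1^d0^{n-d},pn)|$, the size of the intersection of two Hamming balls of radius $pn$ whose centers are at distance $d$. *)

(* Defs.v *)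
From mathcomp Require Import all_boot.
From Stdlib Require Import Reals.

Set Implicit Arguments.
Unset Strict Implicit.
Unset Printing Implicit Defensive.

Definition hamming (n : nat) (x y : n.-tuple bool) : nat :=
  #|[set i : 'I_n | tnth x i != tnth y i]|.

Definition hball (n : nat) (x : n.-tuple bool) (r : nat) : {set n.-tuple bool} :=
  [set y | hamming x y <= r].

Definition zero_word (n : nat) : n.-tuple bool := [tuple false | i < n].
Definition ones_prefix (n d : nat) : n.-tuple bool := [tuple (i < d) | i < n].

Definition Vol (n r : nat) : nat := #|hball (zero_word n) r|.

Definition VolI (n r d : nat) : nat :=
  #|hball (zero_word n) r :&: hball (ones_prefix n d) r|.

Definition alpha (p : R) : R :=
  (/ 2 * (ln (/ (4 * p * (1 - p))) / ln 2))%R.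

(* Main.v *)
Require Import Defs.
From mathcomp Require Import all_boot.
From Stdlib Require Import Reals.
From mathcomp Require Import Rstruct.
From Stdlib Require Import Lra Lia.

Lemma iter_pow (c : R) k : iter k (Rmult c) 1%R = (c ^ k)%R.
Proof. by elim: k => //= k ->. Qed.

Lemma iter_add (c : R) k : iter k (Rplus c) 0%R = (INR k * c)%R.
Proof. elim: k => [/=|k IH]; first lra. rewrite S_INR /= IH; lra. Qed.

Lemma prod_sum n (g : 'I_n -> bool -> R) :
  \big[Rplus/0%R]_(y : n.-tuple bool) \big[Rmult/1%R]_(i < n) g i (tnth y i)
  = \big[Rmult/1%R]_(i < n) (g i false + g i true)%R.
Proof.
transitivity (\big[Rmult/1%R]_(i < n) \big[Rplus/0%R]_(b : bool) g i b); last first.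
  by apply: eq_bigr => i _; rewrite big_bool Rplus_comm.
rewrite bigA_distr_bigA.
rewrite (reindex (fun y : n.-tuple bool => [ffun i => tnth y i])) /=.
  by apply: eq_bigr => y _; apply: eq_bigr => i _; rewrite ffunE.
exists (fun f : {ffun 'I_n -> bool} => [tuple f i | i < n]) => y _.
  by apply: eq_from_tnth => i; rewrite tnth_mktuple ffunE.
by apply/ffunP => i; rewrite ffunE tnth_mktuple.
Qed.

Lemma prod_ind n (P : pred 'I_n) (c : R) :
  \big[Rmult/1%R]_(i < n) (if P i then c else 1%R) = (c ^ #|[set i | P i]|)%R.
Proof. by rewrite -big_mkcond big_const cardsE iter_pow. Qed.

Lemma prod_split n d (a b : R) : (d <= n)%nat ->
  \big[Rmult/1%R]_(i < n) (if (i < d)%nat then a else b) = (a ^ d * b ^ (n - d))%R.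
Proof.
move=> dn.
rewrite -(big_mkord xpredT (fun i => if (i < d)%nat then a else b)).
rewrite (@big_cat_nat _ _ _ d 0 n _ _ (leq0n d) dn) /=.
rewrite (eq_big_nat _ _ (F2 := fun _ => a)); last by move=> i /andP[_ ->].
rewrite [X in (_ * X)%R](eq_big_nat _ _ (F2 := fun _ => b)); last first.
  by move=> i /andP[H _]; rewrite ltnNge H.
by rewrite !big_const_nat !iter_pow subn0.
Qed.

Lemma sum_le (I : finType) (P : pred I) (F G : I -> R) :
  (forall i, P i -> F i <= G i)%R ->
  (\big[Rplus/0%R]_(i | P i) F i <= \big[Rplus/0%R]_(i | P i) G i)%R.
Proof. move=> H; apply: (big_ind2 Rle) => //; [lra|] => *; lra. Qed.

Lemma sum_nat_le (m n : nat) (F G : nat -> R) :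
  (forall i, (m <= i)%nat && (i < n)%nat -> (F i <= G i)%R) ->
  (\big[Rplus/0%R]_(m <= i < n) F i <= \big[Rplus/0%R]_(m <= i < n) G i)%R.
Proof.
move=> H; rewrite big_nat_cond [X in (_ <= X)%R]big_nat_cond.
apply: (big_ind2 Rle) => //; [lra| move=> *; lra|].
by move=> i /andP[Hi _]; apply: H.
Qed.

Lemma sum_sub (I : finType) (P : pred I) (F : I -> R) :
  (forall i, 0 <= F i)%R ->
  (\big[Rplus/0%R]_(i | P i) F i <= \big[Rplus/0%R]_i F i)%R.
Proof.
move=> H; rewrite big_mkcond /=; apply: sum_le => i _.
by case: (P i) => //; apply: Rle_refl.
Qed.

Lemma ham_pow n (x y : n.-tuple bool) (s : R) :
  (s ^ hamming x y)%R = \big[Rmult/1%R]_(i < n) (if tnth x i != tnth y i then s else 1%R).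
Proof. by rewrite (@prod_ind n (fun i => tnth x i != tnth y i)). Qed.

Lemma pow_le1 (s : R) k : (0 <= s <= 1)%R -> (0 <= s ^ k <= 1)%R.
Proof.
move=> Hs; elim: k => [/=|k IH]; first lra.
rewrite /=; split; first by apply: Rmult_le_pos; lra.
have -> : 1%R = (1 * 1)%R by lra.
apply: Rmult_le_compat; lra.
Qed.

Lemma pow_dec (s : R) h r : (0 <= s <= 1)%R -> (h <= r)%nat -> (s ^ r <= s ^ h)%R.
Proof.
move=> Hs hr; rewrite -(subnKC hr) pow_add.
have := pow_le1 s (r - h) Hs; have := pow_le1 s h Hs => A B.
set a := (s ^ h)%R in A B *; set b := (s ^ (r - h))%R in A B *; nra.
Qed.

Lemma partA n d r (s : R) : (d <= n)%nat -> (0 < s <= 1)%R ->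
  (INR (VolI n r d) * (s ^ r * s ^ r) <= (2 * s) ^ d * (1 + s * s) ^ (n - d))%R.
Proof.
move=> dn Hs.
rewrite /VolI -iter_add -big_const.
apply: Rle_trans.
  apply: (@sum_le _ _ _ (fun y => s ^ hamming (zero_word n) y * s ^ hamming (ones_prefix n d) y)%R).
  move=> y; rewrite !inE => /andP[h1 h2].
  apply: Rmult_le_compat; try (apply: pow_le; lra); apply: pow_dec => //; lra.
apply: Rle_trans.
  apply: sum_sub => y; apply: Rmult_le_pos; apply: pow_le; lra.
rewrite -(prod_split _ _ (2 * s)%R (1 + s * s)%R dn).
under eq_bigr => y _ do rewrite !ham_pow -big_split /=.
rewrite (@prod_sum n (fun i b => (if tnth (zero_word n) i != b then s else 1) *
   (if tnth (ones_prefix n d) i != b then s else 1))%R).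
apply: Req_le; apply: eq_bigr => i _.
rewrite /zero_word /ones_prefix !tnth_mktuple.
case: (i < d)%nat => /=; lra.
Qed.

Lemma vol_ge n r : ('C(n, r) <= Vol n r)%nat.
Proof.
rewrite /Vol.
have <- : #|[set [tuple (i \in A) | i < n] | A : {set 'I_n} in [set A : {set 'I_n} | #|A| == r]]| = 'C(n, r).
  rewrite card_imset; first by rewrite card_draws card_ord.
  move=> A B /= eq; apply/setP => i.
  by have := congr1 (fun t => tnth t i) eq; rewrite !tnth_mktuple.
apply: subset_leq_card; apply/subsetP => y /imsetP [A]; rewrite inE => /eqP hA ->.
rewrite inE /hamming.
have -> : [set i | tnth (zero_word n) i != tnth [tuple (i \in A) | i < n] i] = A.
  by apply/setP => i; rewrite inE /zero_word !tnth_mktuple; case: (i \in A).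
by rewrite hA.
Qed.

Lemma fact_eq n : Factorial.fact n = n`!.
Proof. by elim: n => // n IH; rewrite factS /= IH. Qed.

Lemma INR_pos {n} : (0 < n)%nat -> (0 < INR n)%R.
Proof. by move=> /ltP H; apply: lt_0_INR. Qed.

Lemma binom_C n k : (k <= n)%nat -> C n k = INR 'C(n, k).
Proof.
move=> kn; rewrite /C minusE !fact_eq -(bin_fact kn) !mult_INR.
have := INR_pos (fact_gt0 k); have := INR_pos (fact_gt0 (n - k)) => A B.
field; lra.
Qed.

Lemma sum_f_big f N : sum_f_R0 f N = \big[Rplus/0%R]_(0 <= i < N.+1) f i.
Proof.
elim: N => [|N IH]; first by rewrite big_nat1.
by rewrite big_nat_recr //= IH.
Qed.

Lemma binom_big n (q : R) :
  ((1 + q) ^ n)%R = \big[Rplus/0%R]_(0 <= k < n.+1) (INR 'C(n, k) * q ^ k)%R.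
Proof.
rewrite Rplus_comm binomial sum_f_big.
apply: eq_big_nat => k /andP[_ kn].
by rewrite binom_C // pow1 Rmult_1_r.
Qed.

Lemma div_le_mono (a b c : R) : (0 <= a)%R -> (0 < b)%R -> (b <= c)%R -> (a / c <= a / b)%R.
Proof.
move=> ha hb hbc; rewrite /Rdiv; apply: Rmult_le_compat_l => //.
by apply: Rinv_le_contravar.
Qed.

Lemma div_le1 (a b : R) : (0 <= a)%R -> (a <= b)%R -> (0 < b)%R -> (a / b <= 1)%R.
Proof.
move=> ha hab hb; have -> : 1%R = (b / b)%R by field; lra.
by apply: Rmult_le_compat_r => //; left; apply: Rinv_0_lt_compat.
Qed.

Lemma up_bound (t : nat -> R) r s : (0 < INR r)%R -> (forall k, 0 <= t k)%R ->
  (forall k, (r <= k)%nat -> t k.+1 <= t k * (INR r / INR k.+1))%R ->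
  forall j, (t (r + j)%nat <= t r * (INR r / INR (r + s)%nat) ^ (j - s)%nat)%R.
Proof.
move=> hr t0 ht; elim=> [|j IH].
  by rewrite addn0 sub0n /=; lra.
have H1 := ht (r + j) (leq_addr _ _).
rewrite addnS.
have f0 : (0 <= INR r / INR (r + j)%nat.+1)%R.
  by apply: Rmult_le_pos; [lra | left; apply: Rinv_0_lt_compat; apply: INR_pos].
have tr0 := t0 r; have trj := t0 (r + j).
case: (ltnP j s) => js.
  have -> : (j.+1 - s = 0)%nat by apply/eqP; rewrite subn_eq0.
  move: IH; have -> : (j - s = 0)%nat by apply/eqP; rewrite subn_eq0 ltnW.
  rewrite /= Rmult_1_r => IH.
  have f1 : (INR r / INR (r + j)%nat.+1 <= 1)%R.
    apply: div_le1; first lra.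
      by apply: le_INR; apply/leP; rewrite -addnS leq_addr.
    exact: INR_pos.
  apply: (Rle_trans _ _ _ H1); nra.
rewrite subSn //=.
have rho : (INR r / INR (r + j)%nat.+1 <= INR r / INR (r + s)%nat)%R.
  apply: div_le_mono; first lra.
    by apply: INR_pos; rewrite addn_gt0; apply/orP; left; apply/ltP; apply: INR_lt; rewrite /=; lra.
  by apply: le_INR; apply/leP; rewrite -addnS leq_add2l leqW.
move: H1 f0 rho IH.
set F := (INR r / INR (r + j)%nat.+1)%R.
set Rh := (INR r / INR (r + s)%nat)%R.
move=> H1 f0 rho IH.
have P0 : (0 <= Rh ^ (j - s))%R by apply: pow_le; lra.
move: IH P0; set P := (Rh ^ (j - s))%R => IH P0.
nra.
Qed.

Lemma down_bound (t : nat -> R) r s : (0 < INR r)%R -> (forall k, 0 <= t k)%R ->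
  (forall k, (k < r)%nat -> t k <= t k.+1 * (INR k.+1 / INR r))%R ->
  forall j, (j <= r)%nat -> (t (r - j)%nat <= t r * (INR (r - s)%nat / INR r) ^ (j - s)%nat)%R.
Proof.
move=> hr t0 ht; elim=> [_|j IH jr].
  by rewrite subn0 sub0n /=; lra.
have IH' := IH (ltnW jr).
have r0 : (0 < r)%nat by apply: leq_ltn_trans jr.
have H1 := ht (r - j.+1)%nat (ltac:(by rewrite ltn_subrL r0)).
rewrite subnSK // in H1.
have f0 : (0 <= INR (r - j)%nat / INR r)%R.
  by apply: Rmult_le_pos; [apply: pos_INR | left; apply: Rinv_0_lt_compat].
have tr0 := t0 r; have trj := t0 (r - j)%nat.
case: (ltnP j s) => js.
  have -> : (j.+1 - s = 0)%nat by apply/eqP; rewrite subn_eq0.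
  move: IH'; have -> : (j - s = 0)%nat by apply/eqP; rewrite subn_eq0 ltnW.
  rewrite /= Rmult_1_r => IH'.
  have f1 : (INR (r - j)%nat / INR r <= 1)%R.
    apply: div_le1 => //; first exact: pos_INR.
    by apply: le_INR; apply/leP; rewrite leq_subr.
  move: H1 f0 f1; set F := (INR (r - j)%nat / INR r)%R => H1 f0 f1.
  nra.
rewrite subSn //=.
have rho : (INR (r - j)%nat / INR r <= INR (r - s)%nat / INR r)%R.
  apply: Rmult_le_compat_r; first by left; apply: Rinv_0_lt_compat.
  by apply: le_INR; apply/leP; rewrite leq_sub2l.
move: H1 f0 rho IH'.
set F := (INR (r - j)%nat / INR r)%R.
set Rh := (INR (r - s)%nat / INR r)%R.
move=> H1 f0 rho IH2.
have P0 : (0 <= Rh ^ (j - s))%R by apply: pow_le; lra.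
move: IH2 P0; set P := (Rh ^ (j - s))%R => IH2 P0.
nra.
Qed.

Lemma geo (rho : R) s M : (0 <= rho < 1)%R ->
  (\big[Rplus/0%R]_(0 <= j < M) rho ^ (j - s)%nat <= INR s + / (1 - rho))%R.
Proof.
move=> hr.
have key : forall M, (\big[Rplus/0%R]_(0 <= j < M) rho ^ (j - s)%nat <=
   INR (minn M s) + (1 - rho ^ (M - s)%nat) / (1 - rho))%R.
  elim=> [|m IH].
    rewrite big_geq // sub0n /=; have -> : minn 0 s = 0%nat by rewrite min0n.
    rewrite /=; have -> : ((1 - 1) / (1 - rho) = 0)%R by field; lra.
    lra.
  rewrite big_nat_recr //=.
  case: (ltnP m s) => ms.
    have e1 : (m - s = 0)%nat by apply/eqP; rewrite subn_eq0 ltnW.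
    have e2 : (m.+1 - s = 0)%nat by apply/eqP; rewrite subn_eq0.
    rewrite e1 e2 in IH *.
    have -> : minn m.+1 s = m.+1 by apply/minn_idPl.
    move: IH; have -> : minn m s = m by apply/minn_idPl; apply: ltnW.
    rewrite S_INR /=; lra.
  rewrite subSn //.
  have -> : minn m.+1 s = s by apply/minn_idPr; apply: leqW.
  move: IH; have -> : minn m s = s by apply/minn_idPr.
  have : ((1 - rho ^ (m - s)%nat) / (1 - rho) + rho ^ (m - s)%nat = (1 - rho ^ (m - s).+1) / (1 - rho))%R.
    by rewrite -tech_pow_Rmult; field; lra.
  lra.
apply: Rle_trans (key M) _.
have h1 : (INR (minn M s) <= INR s)%R by apply: le_INR; apply/leP; apply: geq_minr.
have h2 : (0 <= rho ^ (M - s)%nat)%R by apply: pow_le; lra.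
have h3 : (0 < / (1 - rho))%R by apply: Rinv_0_lt_compat; lra.
have -> : ((1 - rho ^ (M - s)%nat) / (1 - rho) = / (1 - rho) - rho ^ (M - s)%nat * / (1 - rho))%R.
  by rewrite /Rdiv; ring.
nra.
Qed.

Lemma div_le_of (a b c : R) : (0 < b)%R -> (a <= c * b)%R -> (a / b <= c)%R.
Proof.
move=> hb h; have -> : c = (c * b / b)%R by field; lra.
by apply: Rmult_le_compat_r => //; left; apply: Rinv_0_lt_compat.
Qed.

Lemma sum_scale (m n : nat) (c : R) (F : nat -> R) :
  \big[Rplus/0%R]_(m <= i < n) (c * F i)%R = (c * \big[Rplus/0%R]_(m <= i < n) F i)%R.
Proof. by rewrite big_distrr. Qed.

Lemma partB n r (q : R) : (0 < q)%R -> (0 < r)%nat -> (r <= n)%nat ->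
  (INR (n - r)%nat * q = INR r)%R ->
  ((1 + q) ^ n <= 11 * sqrt (INR n) * (INR 'C(n, r) * q ^ r))%R.
Proof.
move=> q0 r0 rn hq.
set t := fun k => (INR 'C(n, k) * q ^ k)%R.
have t0 : forall k, (0 <= t k)%R.
  by move=> k; apply: Rmult_le_pos; [apply: pos_INR| apply: pow_le; lra].
have hr : (0 < INR r)%R by apply: INR_pos.
have E : forall k, (INR 'C(n, k.+1) = INR (n - k)%nat * INR 'C(n, k) / INR k.+1)%R.
  move=> k; have k1 : (0 < INR k.+1)%R by apply: INR_pos.
  have E : (INR k.+1 * INR 'C(n, k.+1) = INR (n - k)%nat * INR 'C(n, k))%R.
    by rewrite -!mult_INR !multE mul_bin_left.
  rewrite -E; field; lra.
have tup : forall k, (r <= k)%nat -> (t k.+1 <= t k * (INR r / INR k.+1))%R.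
  move=> k rk; rewrite /t E.
  have L : (INR (n - k)%nat * q <= INR r)%R.
    rewrite -hq; apply: Rmult_le_compat_r; first lra.
    by apply: le_INR; apply/leP; rewrite leq_sub2l.
  have k1 : (0 < INR k.+1)%R by apply: INR_pos.
  have -> : (INR (n - k)%nat * INR 'C(n, k) / INR k.+1 * q ^ k.+1 =
     (INR (n - k)%nat * q) * (INR 'C(n, k) * q ^ k / INR k.+1))%R.
    by rewrite -tech_pow_Rmult; field; lra.
  have -> : (INR 'C(n, k) * q ^ k * (INR r / INR k.+1) =
     INR r * (INR 'C(n, k) * q ^ k / INR k.+1))%R by field; lra.
  apply: Rmult_le_compat_r => //.
  apply: Rmult_le_pos; first by apply: t0.
  by left; apply: Rinv_0_lt_compat.
have tdown : forall k, (k < r)%nat -> (t k <= t k.+1 * (INR k.+1 / INR r))%R.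
  move=> k rk; rewrite /t E.
  have L : (INR r <= INR (n - k)%nat * q)%R.
    rewrite -hq; apply: Rmult_le_compat_r; first lra.
    by apply: le_INR; apply/leP; rewrite leq_sub2l // ltnW.
  have k1 : (0 < INR k.+1)%R by apply: INR_pos.
  have -> : (INR (n - k)%nat * INR 'C(n, k) / INR k.+1 * q ^ k.+1 * (INR k.+1 / INR r) =
     (INR (n - k)%nat * q / INR r) * (INR 'C(n, k) * q ^ k))%R.
    by rewrite -tech_pow_Rmult; field; lra.
  rewrite -{1}(Rmult_1_l (INR 'C(n, k) * q ^ k)).
  apply: Rmult_le_compat_r; first by apply: t0.
  have -> : (INR (n - k)%nat * q / INR r = 1 + (INR (n - k)%nat * q - INR r) / INR r)%R.
    by field; lra.
  have : (0 <= (INR (n - k)%nat * q - INR r) / INR r)%R.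
    by apply: Rmult_le_pos; [lra| left; apply: Rinv_0_lt_compat].
  lra.
have [A B] := Nat.sqrt_spec r (Nat.le_0_l r).
set s := Nat.sqrt r in A B *.
have s1 : (0 < s)%nat by apply/ltP; move/ltP: r0 => r0'; nia.
have sr : (s <= r)%nat by apply/leP; move/ltP: s1 => s1'; nia.
have hs : (0 < INR s)%R by apply: INR_pos.
have A' : (INR s * INR s <= INR r)%R by rewrite -mult_INR; apply: le_INR; exact: A.
have B' : (INR r + 1 <= (INR s + 1) * (INR s + 1))%R.
  by have := le_INR _ _ B; rewrite S_INR mult_INR S_INR.
have hsn : (INR s <= sqrt (INR n))%R.
  rewrite -(sqrt_square (INR s)); last lra.
  apply: sqrt_le_1_alt; apply: Rle_trans A' _; apply: le_INR; exact/leP.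
set sig := (INR (r - s)%nat / INR r)%R.
set rho := (INR r / INR (r + s)%nat)%R.
have esub : INR (r - s)%nat = (INR r - INR s)%R by rewrite -minusE minus_INR //; apply/leP.
have eadd : INR (r + s)%nat = (INR r + INR s)%R by rewrite -plusE plus_INR.
have sR : (INR s <= INR r)%R by apply: le_INR; apply/leP.
have sig01 : (0 <= sig < 1)%R.
  rewrite /sig esub; split.
    apply: Rmult_le_pos; [lra| left; apply: Rinv_0_lt_compat; lra].
  have -> : ((INR r - INR s) / INR r = 1 - INR s / INR r)%R by field; lra.
  have : (0 < INR s / INR r)%R by apply: Rdiv_lt_0_compat.
  lra.
have rho01 : (0 <= rho < 1)%R.
  rewrite /rho eadd; split.
    apply: Rmult_le_pos; [lra| left; apply: Rinv_0_lt_compat; lra].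
  have -> : (INR r / (INR r + INR s) = 1 - INR s / (INR r + INR s))%R by field; lra.
  have : (0 < INR s / (INR r + INR s))%R by apply: Rdiv_lt_0_compat; lra.
  lra.
have isig : (/ (1 - sig) <= INR s + 2)%R.
  have -> : (1 - sig = INR s / INR r)%R by rewrite /sig esub; field; lra.
  have -> : (/ (INR s / INR r) = INR r / INR s)%R by field; lra.
  apply: div_le_of => //; nra.
have irho : (/ (1 - rho) <= INR s + 3)%R.
  have -> : (1 - rho = INR s / (INR r + INR s))%R by rewrite /rho eadd; field; lra.
  have -> : (/ (INR s / (INR r + INR s)) = (INR r + INR s) / INR s)%R by field; lra.
  apply: div_le_of => //; nra.
rewrite binom_big.
rewrite (@big_cat_nat _ _ _ r 0 n.+1 _ _ (leq0n r) (leqW rn)) /=.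
have low : (\big[Rplus/0%R]_(0 <= i < r) t i <= t r * (INR s + / (1 - sig)))%R.
  rewrite big_nat_rev /= add0n.
  apply: Rle_trans.
    apply: (@sum_nat_le 0 r _ (fun i => t r * sig ^ (i - s)%nat)%R).
    move=> i /andP[_ ir].
    apply: Rle_trans (down_bound t r s hr t0 tdown i.+1 ir) _.
    apply: Rmult_le_compat_l; first exact: t0.
    apply: pow_dec; first by move: sig01; rewrite /sig; lra.
    by apply: leq_sub2r.
  rewrite sum_scale; apply: Rmult_le_compat_l; first exact: t0.
  exact: geo.
have up : (\big[Rplus/0%R]_(r <= i < n.+1) t i <= t r * (INR s + / (1 - rho)))%R.
  rewrite -{1}(add0n r) big_addn.
  apply: Rle_trans.
    apply: (@sum_nat_le 0 (n.+1 - r) _ (fun i => t r * rho ^ (i - s)%nat)%R).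
    move=> i _; rewrite addnC.
    exact: (up_bound t r s hr t0 tup i).
  rewrite sum_scale; apply: Rmult_le_compat_l; first exact: t0.
  exact: geo.
have tr0 := t0 r.
have : (t r * (INR s + / (1 - sig)) + t r * (INR s + / (1 - rho)) <= t r * (9 * INR s))%R.
  have s1R : (1 <= INR s)%R by apply: (le_INR 1); apply/leP.
  rewrite -Rmult_plus_distr_l; apply: Rmult_le_compat_l => //; lra.
rewrite /t in low up tr0 * => H.
have : (INR 'C(n, r) * q ^ r * (9 * INR s) <= 11 * sqrt (INR n) * (INR 'C(n, r) * q ^ r))%R.
  have : (9 * INR s <= 11 * sqrt (INR n))%R by lra.
  move: tr0; set T := (INR 'C(n, r) * q ^ r)%R; nra.
lra.
Qed.

Lemma alpha_pow (p : R) d : (0 < p)%R -> (p < / 2)%R ->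
  Rpower 2 (- (alpha p * INR d)) =
  ((2 * sqrt (p / (1 - p)) / (1 + p / (1 - p))) ^ d)%R.
Proof.
move=> hp0 hp1.
have l2 : (/ 2 < ln 2)%R := ln_lt_2.
have x0 : (0 < 4 * p * (1 - p))%R by nra.
have -> : (- (alpha p * INR d) = (- alpha p) * INR d)%R by ring.
rewrite -Rpower_mult Rpower_pow; last by rewrite /Rpower; apply: exp_pos.
congr (_ ^ _)%R.
have -> : Rpower 2 (- alpha p) = Rpower (4 * p * (1 - p)) (/ 2).
  rewrite /Rpower /alpha ln_Rinv //; congr exp; field; lra.
rewrite Rpower_sqrt //.
have q0 : (0 <= p / (1 - p))%R by apply: Rmult_le_pos; [lra| left; apply: Rinv_0_lt_compat; lra].
have g0 : (0 <= 2 * sqrt (p / (1 - p)) / (1 + p / (1 - p)))%R.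
  apply: Rmult_le_pos; first by have := sqrt_pos (p / (1 - p)); lra.
  left; apply: Rinv_0_lt_compat; lra.
rewrite -(sqrt_square _ g0); congr sqrt.
have -> : (2 * sqrt (p / (1 - p)) / (1 + p / (1 - p)) * (2 * sqrt (p / (1 - p)) / (1 + p / (1 - p)))
   = 4 * (sqrt (p / (1 - p)) * sqrt (p / (1 - p))) / ((1 + p / (1 - p)) * (1 + p / (1 - p))))%R.
  field; lra.
rewrite sqrt_sqrt //; field; lra.
Qed.

Theorem lemma9 (p : R) (hp0 : (0 < p)%R) (hp1 : (p < / 2)%R) :
  exists C : R, (0 < C)%R /\
  exists N : nat, forall n : nat, (N <= n)%coq_nat ->
    forall r : nat, INR r = (p * INR n)%R ->
    forall d : nat, (1 <= d)%coq_nat -> (d <= n)%coq_nat ->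
      (INR (VolI n r d) / INR (Vol n r)
         <= Rpower 2 (- (alpha p * INR d)) * C * sqrt (INR n))%R.
Proof.
exists 11%R; split; first lra.
exists 0%nat => n _ r hr d hd1 hdn.
have n1 : (1 <= INR n)%R by apply: (le_INR 1); lia.
have rpos : (0 < r)%nat.
  apply/ltP; apply: INR_lt; rewrite hr /=; nra.
have rn : (r <= n)%nat by apply/leP; apply: INR_le; rewrite hr; nra.
have dn : (d <= n)%nat by apply/leP.
set q := (p / (1 - p))%R.
have q0 : (0 < q)%R by apply: Rdiv_lt_0_compat; lra.
have q1 : (q < 1)%R.
  rewrite /q; apply: (Rmult_lt_reg_r (1 - p)); first lra.
  have -> : (p / (1 - p) * (1 - p) = p)%R by field; lra.
  lra.
have hq : (INR (n - r)%nat * q = INR r)%R.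
  rewrite -minusE minus_INR; last by apply/leP.
  rewrite hr /q; field; lra.
set s := sqrt q.
have ss : (s * s = q)%R by apply: sqrt_sqrt; lra.
have s0 : (0 < s)%R by apply: sqrt_lt_R0.
have s1 : (s <= 1)%R by rewrite /s -sqrt_1; apply: sqrt_le_1_alt; lra.
have HA := partA n d r s dn (conj s0 s1).
have HB := partB n r q q0 rpos rn hq.
have HC : (INR 'C(n, r) <= INR (Vol n r))%R by apply: le_INR; apply/leP; apply: vol_ge.
have Cpos : (0 < INR 'C(n, r))%R by apply: INR_pos; rewrite bin_gt0.
rewrite alpha_pow // -/q -/s.
set g := (2 * s / (1 + q))%R.
have g0 : (0 <= g)%R by rewrite /g; apply: Rmult_le_pos; [lra| left; apply: Rinv_0_lt_compat; lra].
have e1 : ((2 * s) ^ d * (1 + s * s) ^ (n - d) = g ^ d * (1 + q) ^ n)%R.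
  rewrite ss.
  have -> : (2 * s = g * (1 + q))%R by rewrite /g; field; lra.
  rewrite Rpow_mult_distr Rmult_assoc -pow_add.
  by rewrite plusE subnKC.
rewrite e1 -Rpow_mult_distr ss in HA.
have qr0 : (0 < q ^ r)%R by apply: pow_lt.
have gd0 : (0 <= g ^ d)%R by apply: pow_le.
have sq0 : (0 <= sqrt (INR n))%R by apply: sqrt_pos.
have H2 : (INR (VolI n r d) * q ^ r <= (g ^ d * 11 * sqrt (INR n) * INR (Vol n r)) * q ^ r)%R.
  apply: (Rle_trans _ _ _ HA).
  have : (g ^ d * (1 + q) ^ n <= g ^ d * (11 * sqrt (INR n) * (INR 'C(n, r) * q ^ r)))%R.
    by apply: Rmult_le_compat_l.
  have : (11 * sqrt (INR n) * (INR 'C(n, r) * q ^ r) <= 11 * sqrt (INR n) * (INR (Vol n r) * q ^ r))%R.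
    apply: Rmult_le_compat_l; first lra.
    by apply: Rmult_le_compat_r; lra.
  move: gd0; set G := (g ^ d)%R; set Q := (q ^ r)%R; set S := sqrt (INR n).
  move=> gd0 h1 h2.
  have -> : (G * 11 * S * INR (Vol n r) * Q = G * (11 * S * (INR (Vol n r) * Q)))%R by ring.
  apply: Rle_trans h2 _; apply: Rmult_le_compat_l => //; exact: h1.
have H3 := Rmult_le_reg_r _ _ _ qr0 H2.
apply: div_le_of; first lra.
exact: H3.
Qed.
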